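(* Let $0<q<1$, $N$ a positive integer, $n\in\{0,1,\dots,N\}$, and $\gamma\in\mathbb{C}$ with $\gamma q,\gamma q^2\notin\{q^{-j}:j\in\mathbb{Z}_{\ge0}\}$. Then $${}_4\phi_3\!\left(\begin{matrix}q^{-2n},q^{-2(N-n)-1},q^{-x},-\gamma q^{x+1}\\ q^{-N},-q^{-N},\gamma q\end{matrix};q,q\right)={}_4\phi_3\!\left(\begin{matrix}q^{-2n},q^{2n-2N-1},q^{-2x},\gamma^2q^{2x+2}\\ q^{-2N},\gamma q,\gamma q^2\end{matrix};q^2,q^2\right)$$ holds for all $x\in\mathbb{C}$ if $2n\le N$, and holds for $x\in\{0,1,\dots,N\}$ if $2n>N$.
   Context: $(x;q)_k=\prod_{j=0}^{k-1}(1-xq^j)$. A terminating ${}_4\phi_3\!\left(\begin{matrix}a_1,\dots,a_4\\ b_1,b_2,b_3\end{matrix};p,p\right)$ (base $p$, here $p=q$ or $p=q^2$) means $\sum_{k=0}^K\frac{(a_1,\dots,a_4;p)_k}{(b_1,b_2,b_3,p;p)_k}p^k$, where $K$ is the smallest nonnegative integer such that some numerator parameter $a_i$ equals $p^{-K}$ (the sum is truncated at the first numerator parameter that causes termination). *)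

(* Defs.v *)
From Stdlib Require Import Reals ClassicalEpsilon.
Open Scope R_scope.

Definition Cplx : Type := (R * R)%type.
Definition RtoC (r : R) : Cplx := (r, 0).
Definition Cadd (z w : Cplx) : Cplx := (fst z + fst w, snd z + snd w).
Definition Copp (z : Cplx) : Cplx := (- fst z, - snd z).
Definition Csub (z w : Cplx) : Cplx := Cadd z (Copp w).
Definition Cmul (z w : Cplx) : Cplx :=
  (fst z * fst w - snd z * snd w, fst z * snd w + snd z * fst w).
Definition Cinv (z : Cplx) : Cplx :=
  (fst z / (fst z ^ 2 + snd z ^ 2), - snd z / (fst z ^ 2 + snd z ^ 2)).
Definition Cdiv (z w : Cplx) : Cplx := Cmul z (Cinv w).
Definition C0 : Cplx := RtoC 0.
Definition C1 : Cplx := RtoC 1.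

Definition Cexp (z : Cplx) : Cplx := (exp (fst z) * cos (snd z), exp (fst z) * sin (snd z)).
Definition Cqpow (q : R) (z : Cplx) : Cplx := Cexp (Cmul z (RtoC (ln q))).

Fixpoint qpoch (x : Cplx) (p : R) (k : nat) : Cplx :=
  match k with
  | O => C1
  | S k' => Cmul (qpoch x p k') (Csub C1 (Cmul x (RtoC (p ^ k'))))
  end.

Fixpoint Csum (f : nat -> Cplx) (K : nat) : Cplx :=
  match K with
  | O => f O
  | S K' => Cadd (Csum f K') (f K)
  end.

Definition terminates_at (a1 a2 a3 a4 : Cplx) (p : R) (k : nat) : Prop :=
  let t := RtoC (/ p ^ k) in a1 = t \/ a2 = t \/ a3 = t \/ a4 = t.

Definition term_index (a1 a2 a3 a4 : Cplx) (p : R) : nat :=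
  epsilon (inhabits 0%nat)
    (fun K => terminates_at a1 a2 a3 a4 p K /\
              forall j, (j < K)%nat -> ~ terminates_at a1 a2 a3 a4 p j).

Definition phi43 (a1 a2 a3 a4 b1 b2 b3 : Cplx) (p : R) : Cplx :=
  Csum (fun k =>
     Cmul
       (Cdiv (Cmul (Cmul (qpoch a1 p k) (qpoch a2 p k)) (Cmul (qpoch a3 p k) (qpoch a4 p k)))
             (Cmul (Cmul (qpoch b1 p k) (qpoch b2 p k)) (Cmul (qpoch b3 p k) (qpoch (RtoC p) p k))))
       (RtoC (p ^ k)))
    (term_index a1 a2 a3 a4 p).

Definition LHS9 (q : R) (N n : nat) (gamma x : Cplx) : Cplx :=
  phi43 (RtoC (/ q ^ (2 * n))) (RtoC (/ q ^ (2 * (N - n) + 1)))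
        (Cqpow q (Copp x)) (Copp (Cmul gamma (Cqpow q (Cadd x C1))))
        (RtoC (/ q ^ N)) (RtoC (- / q ^ N)) (Cmul gamma (RtoC q)) q.

Definition RHS9 (q : R) (N n : nat) (gamma x : Cplx) : Cplx :=
  phi43 (RtoC (/ q ^ (2 * n))) (RtoC (/ q ^ (2 * N + 1 - 2 * n)))
        (Cqpow q (Cmul (RtoC (-2)) x))
        (Cmul (Cmul gamma gamma) (Cqpow q (Cadd (Cmul (RtoC 2) x) (RtoC 2))))
        (RtoC (/ q ^ (2 * N))) (Cmul gamma (RtoC q)) (Cmul gamma (RtoC (q ^ 2))) (q ^ 2).

(* Main.v *)
Require Import Defs.
From Stdlib Require Import Reals Lra Lia Arith Field Classical ClassicalEpsilon.
Import Defs.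
Open Scope R_scope.

Fixpoint rqp (x p : R) (k : nat) : R :=
  match k with O => 1 | S k' => rqp x p k' * (1 - x * p ^ k') end.

Fixpoint sumR (f : nat -> R) (n : nat) : R :=
  match n with O => 0 | S n' => sumR f n' + f n' end.

Lemma sumR_ext f g n : (forall i, (i < n)%nat -> f i = g i) -> sumR f n = sumR g n.
Proof. induction n; simpl; intros H; [reflexivity|]. rewrite IHn by (intros; apply H; lia). rewrite H by lia. reflexivity. Qed.

Lemma sumR_lin a b f g n : sumR (fun i => a * f i - b * g i) n = a * sumR f n - b * sumR g n.
Proof. induction n; simpl; [ring|]. rewrite IHn. ring. Qed.

Lemma sumR_tele G n : sumR (fun i => G (S i) - G i) n = G n - G O.
Proof. induction n; simpl; [ring|]. rewrite IHn. ring. Qed.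

Lemma sumR_zero_tail f n m : (forall i, (n <= i)%nat -> f i = 0) -> sumR f (n + m) = sumR f n.
Proof. intros H; induction m; simpl. now rewrite Nat.add_0_r. rewrite Nat.add_succ_r; simpl. rewrite IHm, H by lia. ring. Qed.

Lemma qpow_lt q a b : 0 < q < 1 -> (a < b)%nat -> q ^ b < q ^ a.
Proof. intros Hq Hab. replace b with (a + (b - a))%nat by lia. rewrite pow_add.
  assert (0 < q ^ a) by (apply pow_lt; lra).
  assert (0 <= q ^ (b - a) < 1) by (apply pow_lt_1_compat; lia || lra).
  nra. Qed.

Lemma qpow_inj q a b : 0 < q < 1 -> q ^ a = q ^ b -> a = b.
Proof. intros Hq H. destruct (Nat.lt_trichotomy a b) as [h|[h|h]]; auto;
  apply (qpow_lt q) in h; auto; lra. Qed.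

Lemma qpow_ne1 q i : 0 < q < 1 -> (0 < i)%nat -> 1 - q ^ i <> 0.
Proof. intros Hq Hi H. assert (q ^ i = q ^ 0) by (simpl; lra). apply qpow_inj in H0; auto; lia. Qed.

Lemma rqp_nz x p k : (forall i, (i < k)%nat -> x * p ^ i <> 1) -> rqp x p k <> 0.
Proof. induction k; simpl; intros H. lra. apply Rmult_integral_contrapositive; split.
  apply IHk; intros; apply H; lia. intro E. apply (H k); lia || lra. Qed.

Lemma rqp_zero x p k i : (i < k)%nat -> x * p ^ i = 1 -> rqp x p k = 0.
Proof. induction k; intros Hi Hx. lia. simpl. destruct (Nat.eq_dec i k). subst. rewrite Hx. ring.
  rewrite IHk by (auto; lia). ring. Qed.

Lemma rqp_shift x q L : q <> 0 -> rqp (x / q) q (S L) = (1 - x / q) * rqp x q L.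
Proof. intros Hq. induction L. simpl. ring.
  change (rqp (x / q) q (S (S L))) with (rqp (x / q) q (S L) * (1 - x / q * q ^ (S L))).
  rewrite IHL. simpl. field. auto. Qed.

Definition qb q j m := rqp q q j / (rqp q q m * rqp q q (j - m)).
Definition lam q j := - / q ^ j.
Definition Rr q n B D j := rqp (/ q ^ (2*n)) (q^2) j * rqp B (q^2) j * (q^2)^j /
   (rqp D (q^2) j * rqp (q^2) (q^2) j).
Definition T q n B D k j := if andb (j <=? k)%nat (k <=? 2*j)%nat then
   Rr q n B D j * qb q j (k-j) * lam q j ^ (k-j) * rqp (lam q j) q (2*j-k) else 0.
Definition Ll q n B D k := rqp (/ q^(2*n)) q k * rqp B q k * q^k / (rqp D (q^2) k * rqp q q k).
Definition Gc q n B D k j := - q^(2*k+2-2*j) * (1 - D * (q^2)^j / q^2) * (1 - q^(2*j-k-1)) * T q n B D (S k) j.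
Definition al q D k := (1 - D*(q^2)^k) * (1 - q^(S k)).
Definition be q n B k := q * (1 - q^k / q^(2*n)) * (1 - B * q^k).

Lemma T_in q n B D k j : (j <= k <= 2*j)%nat ->
  T q n B D k j = Rr q n B D j * qb q j (k-j) * lam q j ^ (k-j) * rqp (lam q j) q (2*j-k).
Proof. intros H. unfold T. replace (andb _ _) with true; [reflexivity|].
  symmetry. apply andb_true_intro; split; apply Nat.leb_le; lia. Qed.

Lemma T_out q n B D k j : ~ (j <= k <= 2*j)%nat -> T q n B D k j = 0.
Proof. intros H. unfold T. destruct (j <=? k)%nat eqn:E1; destruct (k <=? 2*j)%nat eqn:E2; simpl; auto.
  apply Nat.leb_le in E1, E2. lia. Qed.

Lemma powdiv x y m : y <> 0 -> (x / y) ^ m = x ^ m / y ^ m.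
Proof. intros Hy; induction m; simpl. field. rewrite IHm. field. split; auto. apply pow_nonzero; auto. Qed.

Lemma pw2 q j : (q^2)^j = q^j * q^j.
Proof. rewrite <- pow_mult, <- pow_add. f_equal. lia. Qed.
Lemma rqpS x p k : rqp x p (S k) = rqp x p k * (1 - x * p ^ k).
Proof. reflexivity. Qed.
Lemma powS q k : q ^ S k = q * q ^ k.
Proof. reflexivity. Qed.

Lemma WZ_int q n B D m r :
  0 < q < 1 -> B = D * q^(2*n) / q ->
  (forall i, (i <= S (m + r) + m)%nat -> D * (q^2)^i <> 1) ->
  let j := S (m + r) in let k := (j + m)%nat in
  al q D k * T q n B D (S k) j - be q n B k * T q n B D k j
  = Gc q n B D k (S j) - Gc q n B D k j.
Proof.
  intros Hq HB HD j k. unfold Gc.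
  rewrite (T_in q n B D (S k) (S j)) by (unfold k, j; lia).
  rewrite (T_in q n B D (S k) j) by (unfold k, j; lia).
  rewrite (T_in q n B D k j) by (unfold k, j; lia).
  unfold k.
  replace (S (j + m) - S j)%nat with m by lia.
  replace (S (j + m) - j)%nat with (S m) by lia.
  replace (j + m - j)%nat with m by lia.
  replace (2 * S j - S (j + m))%nat with (S (S r)) by (unfold j; lia).
  replace (2 * j - S (j + m))%nat with r by (unfold j; lia).
  replace (2 * j - (j + m))%nat with (S r) by (unfold j; lia).
  replace (2 * (j + m) + 2 - 2 * S j)%nat with (m + m)%nat by lia.
  replace (2 * (j + m) + 2 - 2 * j)%nat with (S (S (m + m)))%nat by lia.
  replace (2 * S j - (j + m) - 1)%nat with (S (S r)) by (unfold j; lia).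
  replace (2 * j - (j + m) - 1)%nat with r by (unfold j; lia).
  unfold qb. replace (j - m)%nat with (S r) by (unfold j; lia).
  replace (j - S m)%nat with r by (unfold j; lia).
  replace (S j - m)%nat with (S (S r)) by (unfold j; lia).
  unfold lam. replace (- / q ^ S j) with ((- / q ^ j) / q) by (rewrite powS; field; split; [apply pow_nonzero|]; lra).
  rewrite rqp_shift by lra. rewrite powdiv by lra.
  unfold Rr, al, be. rewrite !rqpS.
  assert (Hj : q ^ j = q * q^m * q^r) by (unfold j; rewrite powS, pow_add; ring).
  assert (Hjv : j = S (m + r)) by reflexivity.
  clearbody j.
  replace (S r - 1)%nat with r by lia.
  rewrite !pw2. set (q2 := q ^ 2). rewrite !powS, !pow_add, Hj.
  rewrite HB.
  set (L := - / (q * q ^ m * q ^ r)).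
  set (qm := q ^ m). set (qr := q ^ r). set (Q := q ^ (2 * n)).
  set (Fm := rqp q q m). set (Fr := rqp q q r). set (Fj := rqp q q j).
  set (P := rqp L q r). set (Lm := L ^ m).
  set (A1 := rqp (/ Q) q2 j). set (A2 := rqp (D * Q / q) q2 j).
  set (A3 := rqp D q2 j). set (A4 := rqp q2 q2 j).
  unfold q2; simpl pow. unfold L. fold qm qr.
  assert (q <> 0) by lra.
  assert (qm <> 0) by (apply pow_nonzero; lra).
  assert (qr <> 0) by (apply pow_nonzero; lra).
  assert (Q <> 0) by (apply pow_nonzero; lra).
  assert (Fm <> 0) by (apply rqp_nz; intros i _; rewrite <- powS; intro E; apply (qpow_ne1 q (S i)); auto; lia || lra).
  assert (Fr <> 0) by (apply rqp_nz; intros i _; rewrite <- powS; intro E; apply (qpow_ne1 q (S i)); auto; lia || lra).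
  assert (1 - q * qm <> 0) by (unfold qm; rewrite <- powS; apply qpow_ne1; auto; lia).
  assert (1 - q * qr <> 0) by (unfold qr; rewrite <- powS; apply qpow_ne1; auto; lia).
  assert (1 - q * (q * qr) <> 0) by (unfold qr; rewrite <- !powS; apply qpow_ne1; auto; lia).
  assert (A4 <> 0). { apply rqp_nz; intros i _. unfold q2; rewrite <- pow_mult. intro E.
    rewrite <- (pow_O q) in E. rewrite <- pow_add in E. apply qpow_inj in E; auto; lia. }
  assert (A3 <> 0) by (apply rqp_nz; intros i Hi; apply HD; lia).
  assert (1 - D * (q * qm * qr * (q * qm * qr)) <> 0).
  { replace (q * qm * qr) with (q ^ j) by (rewrite Hj; reflexivity). intro E. apply (HD j). lia. rewrite pw2. lra. }
  assert (1 - q * q * (q * qm * qr * (q * qm * qr)) <> 0).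
  { replace (q * qm * qr) with (q ^ j) by (rewrite Hj; reflexivity). replace (q * q * (q ^ j * q ^ j)) with (q ^ (S (S (j + j)))) by (rewrite !powS, pow_add; ring).
    apply qpow_ne1; auto; lia. }
  field; repeat split; auto.
Qed.

Lemma WZ_E q n B D j :
  0 < q < 1 -> B = D * q^(2*n) / q ->
  (forall i, (i <= j + j)%nat -> D * (q^2)^i <> 1) ->
  let k := (j + j)%nat in
  al q D k * T q n B D (S k) j - be q n B k * T q n B D k j
  = Gc q n B D k (S j) - Gc q n B D k j.
Proof.
  intros Hq HB HD k. unfold Gc.
  rewrite (T_in q n B D (S k) (S j)) by (unfold k; lia).
  rewrite (T_out q n B D (S k) j) by (unfold k; lia).
  rewrite (T_in q n B D k j) by (unfold k; lia).
  unfold k.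
  replace (S (j + j) - S j)%nat with j by lia.
  replace (j + j - j)%nat with j by lia.
  replace (2 * S j - S (j + j))%nat with 1%nat by lia.
  replace (2 * j - (j + j))%nat with 0%nat by lia.
  replace (2 * (j + j) + 2 - 2 * S j)%nat with (j + j)%nat by lia.
  replace (2 * S j - (j + j) - 1)%nat with 1%nat by lia.
  unfold qb. replace (j - j)%nat with 0%nat by lia.
  replace (S j - j)%nat with 1%nat by lia.
  unfold lam. replace (- / q ^ S j) with ((- / q ^ j) / q) by (rewrite powS; field; split; [apply pow_nonzero|]; lra).
  rewrite powdiv by lra.
  unfold Rr, al, be. rewrite !rqpS.
  rewrite !pw2. set (q2 := q ^ 2). rewrite !powS, !pow_add.
  rewrite HB.
  set (qj := q ^ j). set (Q := q ^ (2 * n)).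
  set (Fj := rqp q q j). set (L := - / qj). set (Lj := L ^ j).
  set (A1 := rqp (/ Q) q2 j). set (A2 := rqp (D * Q / q) q2 j).
  set (A3 := rqp D q2 j). set (A4 := rqp q2 q2 j).
  unfold q2; simpl pow; simpl rqp. unfold L.
  assert (q <> 0) by lra.
  assert (qj <> 0) by (apply pow_nonzero; lra).
  assert (Q <> 0) by (apply pow_nonzero; lra).
  assert (Fj <> 0) by (apply rqp_nz; intros i _; rewrite <- powS; intro E; apply (qpow_ne1 q (S i)); auto; lia || lra).
  assert (1 - q * qj <> 0) by (unfold qj; rewrite <- powS; apply qpow_ne1; auto; lia).
  assert (1 - q <> 0) by (replace q with (q^1) by ring; apply qpow_ne1; auto; lia).
  assert (A4 <> 0). { apply rqp_nz; intros i _. unfold q2; rewrite <- pow_mult. intro E.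
    rewrite <- (pow_O q) in E. rewrite <- pow_add in E. apply qpow_inj in E; auto; lia. }
  assert (A3 <> 0) by (apply rqp_nz; intros i Hi; apply HD; lia).
  assert (1 - D * (qj * qj) <> 0).
  { intro E. apply (HD j). lia. rewrite pw2. fold qj. lra. }
  assert (1 - q * q * (qj * qj) <> 0).
  { replace (q * q * (qj * qj)) with (q ^ (S (S (j + j)))) by (unfold qj; rewrite !powS, pow_add; ring).
    apply qpow_ne1; auto; lia. }
  field; repeat split; auto.
Qed.

Lemma WZ_all q n B D k j :
  0 < q < 1 -> B = D * q^(2*n) / q ->
  (forall i, (i <= k)%nat -> D * (q^2)^i <> 1) ->
  al q D k * T q n B D (S k) j - be q n B k * T q n B D k j
  = Gc q n B D k (S j) - Gc q n B D k j.
Proof.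
  intros Hq HB HD.
  destruct (le_lt_dec j k) as [Hjk|Hjk].
  - destruct (lt_eq_lt_dec k (2*j)) as [[H|H]|H].
      assert (exists m r, j = S (m + r) /\ k = (S (m + r) + m)%nat) as [m [r [E1 E2]]].
      { exists (k - j)%nat, (j - (k - j) - 1)%nat. split; lia. }
      subst j k. apply WZ_int; auto.
    + replace k with (j + j)%nat in * by lia. apply WZ_E; auto.
    + unfold Gc. rewrite (T_out q n B D (S k) j) by lia. rewrite (T_out q n B D k j) by lia.
      destruct (Nat.eq_dec k (S (2*j))) as [E|E].
      * replace (2 * S j - k - 1)%nat with 0%nat by lia. simpl pow. ring.
      * rewrite (T_out q n B D (S k) (S j)) by lia. ring.
  - unfold Gc. rewrite (T_out q n B D k j) by lia. rewrite (T_out q n B D (S k) (S j)) by lia.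
    destruct (Nat.eq_dec j (S k)) as [E|E].
    + subst j. replace (2 * k + 2 - 2 * S k)%nat with 0%nat by lia.
      replace (2 * S k - k - 1)%nat with (S k) by lia.
      unfold al. rewrite pw2. rewrite (pw2 q (S k)). rewrite !powS. field. lra.
    + rewrite (T_out q n B D (S k) j) by lia. ring.
Qed.

Lemma SCAL q n B D k :
  0 < q < 1 -> B = D * q^(2*n) / q ->
  (forall i, (i < k)%nat -> D * (q^2)^i <> 1) ->
  sumR (T q n B D k) (S k) = Ll q n B D k.
Proof.
  intros Hq HB. induction k as [|k IH]; intros HD.
  - simpl. rewrite T_in by lia. unfold Rr, qb, Ll. simpl. field.
  - assert (Hs := sumR_tele (Gc q n B D k) (S (S k))).
    rewrite <- (sumR_ext (fun j => al q D k * T q n B D (S k) j - be q n B k * T q n B D k j)) in Hs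
      by (intros; apply WZ_all; auto; intros; apply HD; lia).
    rewrite sumR_lin in Hs.
    unfold Gc at 1 2 in Hs. rewrite (T_out q n B D (S k) (S (S k))) in Hs by lia.
    rewrite (T_out q n B D (S k) 0) in Hs by lia.
    change (sumR (T q n B D k) (S (S k))) with (sumR (T q n B D k) (S k) + T q n B D k (S k)) in Hs.
    rewrite (T_out q n B D k (S k)) in Hs by lia.
    rewrite IH in Hs by (intros; apply HD; lia).
    assert (Hal : al q D k <> 0).
    { unfold al. apply Rmult_integral_contrapositive; split.
      - intro E. apply (HD k); lia || lra.
      - apply qpow_ne1; auto; lia. }
    assert (Hx : al q D k * sumR (T q n B D (S k)) (S (S k)) = be q n B k * Ll q n B D k) by lra.
    apply (Rmult_eq_reg_l (al q D k)); auto. rewrite Hx.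
    unfold Ll, al, be. rewrite !rqpS.
    assert (q <> 0) by lra.
    assert (rqp D (q^2) k <> 0) by (apply rqp_nz; intros i Hi; apply HD; lia).
    assert (rqp q q k <> 0) by (apply rqp_nz; intros i _; rewrite <- powS; intro E; apply (qpow_ne1 q (S i)); auto; lia || lra).
    assert (1 - D * (q^2)^k <> 0) by (intro E; apply (HD k); lia || lra).
    assert (1 - q * q^k <> 0) by (rewrite <- powS; apply qpow_ne1; auto; lia).
    assert (q ^ (2*n) <> 0) by (apply pow_nonzero; lra).
    rewrite !powS. field. repeat split; auto.
Qed.

Lemma Cpair_eq (a b c d : R) : a = c -> b = d -> (a, b) = (c, d).
Proof. intros; subst; reflexivity. Qed.

Lemma Cring : ring_theory C0 C1 Cadd Cmul Csub Copp (@eq Cplx).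
Proof.
  constructor; intros; repeat match goal with z : Cplx |- _ => destruct z end;
  cbv [Cadd Cmul Csub Copp C0 C1 RtoC fst snd]; apply Cpair_eq; ring.
Qed.

Lemma Cinv_l (z : Cplx) : z <> C0 -> Cmul (Cinv z) z = C1.
Proof.
  destruct z as [a b]. unfold Cinv, Cmul, C0, C1, RtoC; simpl. intros H.
  assert (a ^ 2 + b ^ 2 <> 0).
  { intro E. apply H. assert (a = 0) by nra. assert (b = 0) by nra. subst; reflexivity. }
  assert (a * a + b * b <> 0) by (simpl in H0; lra).
  apply Cpair_eq; field; auto.
Qed.

Lemma Cfield : field_theory C0 C1 Cadd Cmul Csub Copp Cdiv Cinv (@eq Cplx).
Proof.
  constructor. exact Cring. unfold C1, C0, RtoC. intro E. injection E. lra.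
  reflexivity. exact Cinv_l.
Qed.

Add Field CField : Cfield.

Lemma RtoC_add a b : RtoC (a + b) = Cadd (RtoC a) (RtoC b).
Proof. unfold RtoC, Cadd; simpl; apply Cpair_eq; ring. Qed.
Lemma RtoC_mul a b : RtoC (a * b) = Cmul (RtoC a) (RtoC b).
Proof. unfold RtoC, Cmul; simpl; apply Cpair_eq; ring. Qed.
Lemma RtoC_sub a b : RtoC (a - b) = Csub (RtoC a) (RtoC b).
Proof. unfold RtoC, Csub, Cadd, Copp; simpl; apply Cpair_eq; ring. Qed.
Lemma RtoC_opp a : RtoC (- a) = Copp (RtoC a).
Proof. unfold RtoC, Copp; simpl; apply Cpair_eq; ring. Qed.
Lemma RtoC_inj a b : RtoC a = RtoC b -> a = b.
Proof. unfold RtoC; intros E; injection E; auto. Qed.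
Lemma RtoC_nz a : a <> 0 -> RtoC a <> C0.
Proof. intros H E. apply H. apply RtoC_inj. exact E. Qed.
Lemma RtoC_inv a : a <> 0 -> RtoC (/ a) = Cinv (RtoC a).
Proof. intros H. unfold RtoC, Cinv; simpl. apply Cpair_eq; field; auto. Qed.
Lemma RtoC_div a b : b <> 0 -> RtoC (a / b) = Cdiv (RtoC a) (RtoC b).
Proof. intros H. unfold Rdiv, Cdiv. rewrite RtoC_mul, RtoC_inv; auto. Qed.
Lemma RtoC_1 : RtoC 1 = C1. Proof. reflexivity. Qed.
Lemma RtoC_0 : RtoC 0 = C0. Proof. reflexivity. Qed.

Lemma qpoch_R x p k : qpoch (RtoC x) p k = RtoC (rqp x p k).
Proof. induction k; simpl. reflexivity. rewrite IHk, RtoC_mul, RtoC_sub, RtoC_mul. reflexivity. Qed.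

Fixpoint CS (f : nat -> Cplx) (n : nat) : Cplx :=
  match n with O => C0 | S n' => Cadd (CS f n') (f n') end.

Lemma Csum_CS f K : Csum f K = CS f (S K).
Proof. induction K; simpl. field. rewrite IHK. simpl. reflexivity. Qed.

Lemma CS_ext f g n : (forall i, (i < n)%nat -> f i = g i) -> CS f n = CS g n.
Proof. induction n; simpl; intros H; [reflexivity|]. rewrite IHn by (intros; apply H; lia). rewrite H by lia. reflexivity. Qed.

Lemma CS_add f g n : CS (fun i => Cadd (f i) (g i)) n = Cadd (CS f n) (CS g n).
Proof. induction n; simpl. field. rewrite IHn. field. Qed.

Lemma CS_scal a f n : CS (fun i => Cmul a (f i)) n = Cmul a (CS f n).
Proof. induction n; simpl. field. rewrite IHn. field. Qed.

Lemma CS_zero_tail f n m : (forall i, (n <= i)%nat -> f i = C0) -> CS f (n + m) = CS f n.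
Proof. intros H; induction m; simpl. now rewrite Nat.add_0_r. rewrite Nat.add_succ_r; simpl. rewrite IHm, H by lia. field. Qed.

Lemma CS_split f a b : CS f (a + b) = Cadd (CS f a) (CS (fun i => f (a + i)%nat) b).
Proof. induction b; simpl. rewrite Nat.add_0_r. field. rewrite Nat.add_succ_r. simpl. rewrite IHb. field. Qed.

Lemma CS_swap (f : nat -> nat -> Cplx) n m : CS (fun i => CS (f i) m) n = CS (fun j => CS (fun i => f i j) n) m.
Proof. induction n; simpl. induction m; simpl; [reflexivity|]. rewrite <- IHm. field.
  rewrite IHn. rewrite <- CS_add. reflexivity. Qed.

Lemma CS_sumR f n : CS (fun i => RtoC (f i)) n = RtoC (sumR f n).
Proof. induction n; simpl. reflexivity. rewrite IHn, RtoC_add. reflexivity. Qed.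

Lemma RtoC_inv' a : RtoC (/ a) = Cinv (RtoC a).
Proof. destruct (Req_dec a 0) as [->|H]. rewrite Rinv_0. unfold RtoC, Cinv; simpl.
  apply Cpair_eq; unfold Rdiv; ring. apply RtoC_inv; auto. Qed.

Ltac pushC := unfold Rdiv; repeat (rewrite ?RtoC_mul, ?RtoC_add, ?RtoC_sub, ?RtoC_opp, ?RtoC_inv', ?RtoC_1).

Lemma qpochS z p k : qpoch z p (S k) = Cmul (qpoch z p k) (Csub C1 (Cmul z (RtoC (p ^ k)))).
Proof. reflexivity. Qed.

Lemma qpoch_shift z p L : qpoch z p (S L) = Cmul (Csub C1 z) (qpoch (Cmul z (RtoC p)) p L).
Proof. induction L. rewrite qpochS. change (qpoch z p 0) with C1.
  change (qpoch (Cmul z (RtoC p)) p 0) with C1. rewrite pow_O, RtoC_1. field.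
  rewrite qpochS, IHL, qpochS. change (p ^ S L) with (p * p ^ L). rewrite RtoC_mul. field. Qed.

Definition phiC c d q k := Cmul (qpoch c q k) (qpoch d q k).
Definition coefC q (lam : R) (s : Cplx) n k : Cplx :=
  if (k <=? n)%nat then Cmul (RtoC (qb q n k * lam ^ k * rqp lam q (n - k)))
     (qpoch (Cmul (Cmul (RtoC lam) s) (RtoC (q ^ k))) q (n - k)) else C0.
Definition Aco q (lam : R) (s : Cplx) n k : Cplx :=
  Csub (Cadd C1 (Cmul (Cmul (RtoC (lam * lam)) s) (RtoC (q^n * q^n))))
       (Cmul (RtoC (lam * q^n / q^k)) (Cadd C1 (Cmul s (RtoC (q^k * q^k))))).

Lemma PM q lam c d n k : q <> 0 ->
  Cmul (phiC c d q k) (Cmul (Csub C1 (Cmul (Cmul (RtoC lam) c) (RtoC (q^n))))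
                           (Csub C1 (Cmul (Cmul (RtoC lam) d) (RtoC (q^n)))))
  = Cadd (Cmul (Aco q lam (Cmul c d) n k) (phiC c d q k)) (Cmul (RtoC (lam * q^n / q^k)) (phiC c d q (S k))).
Proof.
  intros Hq. unfold phiC, Aco. rewrite !qpochS. pushC.
  assert (RtoC (q ^ k) <> C0) by (apply RtoC_nz, pow_nonzero; auto).
  field; auto.
Qed.

Ltac nzC := try change (R1, R0) with C1; try change (R0, R0) with C0;
  repeat (rewrite <- ?RtoC_mul, <- ?RtoC_1, <- ?RtoC_sub, <- ?RtoC_add, <- ?RtoC_opp);
  apply RtoC_nz; auto; try lra.

Lemma rqp_q_nz q k : 0 < q < 1 -> rqp q q k <> 0.
Proof. intros Hq. apply rqp_nz; intros i _; rewrite <- powS; intro E; apply (qpow_ne1 q (S i)); auto; lia || lra. Qed.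

Lemma COEF_gen q lam s k' r : 0 < q < 1 ->
  let k := S k' in let n := (S k' + r)%nat in
  coefC q lam s (S n) k = Cadd (Cmul (coefC q lam s n k) (Aco q lam s n k))
     (Cmul (coefC q lam s n k') (RtoC (lam * q^n / q^k'))).
Proof.
  intros Hq k n. unfold coefC.
  replace (k <=? S n)%nat with true by (symmetry; apply Nat.leb_le; unfold k, n; lia).
  replace (k <=? n)%nat with true by (symmetry; apply Nat.leb_le; unfold k, n; lia).
  replace (k' <=? n)%nat with true by (symmetry; apply Nat.leb_le; unfold k, n; lia).
  replace (S n - k)%nat with (S r) by (unfold k, n; lia).
  replace (n - k)%nat with r by (unfold k, n; lia).
  replace (n - k')%nat with (S r) by (unfold k, n; lia).
  rewrite (qpoch_shift (Cmul (Cmul (RtoC lam) s) (RtoC (q ^ k')))).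
  replace (Cmul (Cmul (Cmul (RtoC lam) s) (RtoC (q ^ k'))) (RtoC q)) with
     (Cmul (Cmul (RtoC lam) s) (RtoC (q ^ k))) by (unfold k; rewrite powS, RtoC_mul; field).
  unfold qb. replace (S n - k)%nat with (S r) by (unfold k, n; lia).
  replace (n - k)%nat with r by (unfold k, n; lia).
  replace (n - k')%nat with (S r) by (unfold k, n; lia).
  rewrite qpochS. unfold Aco.
  set (P := qpoch (Cmul (Cmul (RtoC lam) s) (RtoC (q ^ k))) q r).
  assert (Hn : q ^ n = q * q^k' * q^r) by (unfold n; replace (S k' + r)%nat with (S (k' + r)) by lia; rewrite powS, pow_add; ring).
  assert (Hk : q ^ k = q * q^k') by (unfold k; apply powS).
  unfold k. rewrite !rqpS. rewrite Hn.
  set (Fn := rqp q q n). set (Fk := rqp q q k'). set (Fr := rqp q q r). set (Rr0 := rqp lam q r).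
  change (lam ^ S k') with (lam * lam ^ k').
  assert (Fn <> 0) by apply rqp_q_nz, Hq.
  assert (Fk <> 0) by apply rqp_q_nz, Hq.
  assert (Fr <> 0) by apply rqp_q_nz, Hq.
  assert (1 - q * q ^ k' <> 0) by (rewrite <- powS; apply qpow_ne1; auto; lia).
  assert (1 - q * q ^ r <> 0) by (rewrite <- powS; apply qpow_ne1; auto; lia).
  assert (q <> 0) by lra.
  assert (q ^ k' <> 0) by (apply pow_nonzero; lra).
  assert (q ^ r <> 0) by (apply pow_nonzero; lra).
  rewrite !(powS q k').
  pushC.
  repeat match goal with H : ?x <> 0 |- _ => lazymatch goal with
    | _ : RtoC x <> C0 |- _ => fail | _ => assert (RtoC x <> C0) by (apply RtoC_nz; exact H) end end.
  field. repeat split; auto; nzC.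
Qed.

Lemma COEF_0 q lam s n : 0 < q < 1 ->
  coefC q lam s (S n) 0 = Cmul (coefC q lam s n 0) (Aco q lam s n 0).
Proof.
  intros Hq. unfold coefC. simpl Nat.leb. cbv iota.
  rewrite !Nat.sub_0_r. unfold qb. rewrite !Nat.sub_0_r.
  assert (rqp q q n <> 0) by apply rqp_q_nz, Hq.
  assert (rqp q q (S n) <> 0) by apply rqp_q_nz, Hq.
  assert (q <> 0) by lra.
  replace (rqp q q (S n) / (rqp q q 0 * rqp q q (S n))) with 1 by (change (rqp q q 0) with 1; field; auto).
  replace (rqp q q n / (rqp q q 0 * rqp q q n)) with 1 by (change (rqp q q 0) with 1; field; auto).
  rewrite qpochS, (rqpS lam q n). unfold Aco. rewrite !pow_O.
  pushC.
  field. nzC.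
Qed.

Lemma COEF_top q lam s n : 0 < q < 1 ->
  coefC q lam s (S n) (S n) = Cadd (Cmul (coefC q lam s n (S n)) (Aco q lam s n (S n)))
     (Cmul (coefC q lam s n n) (RtoC (lam * q^n / q^n))).
Proof.
  intros Hq. unfold coefC.
  replace (S n <=? S n)%nat with true by (symmetry; apply Nat.leb_le; lia).
  replace (S n <=? n)%nat with false by (symmetry; apply Nat.leb_gt; lia).
  replace (n <=? n)%nat with true by (symmetry; apply Nat.leb_le; lia).
  rewrite !Nat.sub_diag. unfold qb. rewrite !Nat.sub_diag.
  assert (rqp q q n <> 0) by apply rqp_q_nz, Hq.
  assert (rqp q q (S n) <> 0) by apply rqp_q_nz, Hq.
  assert (q ^ n <> 0) by (apply pow_nonzero; lra).
  replace (rqp q q (S n) / (rqp q q (S n) * rqp q q 0)) with 1 by (change (rqp q q 0) with 1; field; auto).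
  replace (rqp q q n / (rqp q q n * rqp q q 0)) with 1 by (change (rqp q q 0) with 1; field; auto).
  change (qpoch ?z q 0) with C1. simpl rqp.
  replace (lam * q ^ n / q ^ n) with lam by (field; auto).
  change (lam ^ S n) with (lam * lam ^ n).
  pushC. field.
Qed.

Lemma CS_shift f m : CS f (S m) = Cadd (f 0%nat) (CS (fun k => f (S k)) m).
Proof. induction m. simpl. field. change (CS f (S (S m))) with (Cadd (CS f (S m)) (f (S m))).
  rewrite IHm. simpl. field. Qed.

Lemma CS_mul_r f a n : Cmul (CS f n) a = CS (fun i => Cmul (f i) a) n.
Proof. induction n; simpl. field. rewrite <- IHn. field. Qed.

Definition hC q lam s n k := match k with O => C0 | S k' => Cmul (coefC q lam s n k') (RtoC (lam * q^n / q^k')) end.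

Lemma COEF_rec q lam s n k : 0 < q < 1 -> (k <= S n)%nat ->
  coefC q lam s (S n) k = Cadd (Cmul (coefC q lam s n k) (Aco q lam s n k)) (hC q lam s n k).
Proof.
  intros Hq Hk. destruct k as [|k'].
  - simpl hC. rewrite COEF_0 by auto. field.
  - simpl hC. destruct (Nat.eq_dec k' n) as [->|Hne].
    + apply COEF_top; auto.
    + replace n with (S k' + (n - S k'))%nat by lia. apply COEF_gen; auto.
Qed.

Lemma CONN q lam c d n : 0 < q < 1 ->
  Cmul (qpoch (Cmul (RtoC lam) c) q n) (qpoch (Cmul (RtoC lam) d) q n) =
  CS (fun k => Cmul (coefC q lam (Cmul c d) n k) (phiC c d q k)) (S n).
Proof.
  intros Hq. induction n.
  - simpl CS. unfold coefC, qb. simpl Nat.leb. cbv iota. simpl rqp. simpl pow. simpl qpoch. unfold phiC. simpl qpoch.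
    replace (1 / (1 * 1) * 1 * 1) with 1 by field. rewrite RtoC_1. field.
  - rewrite !qpochS.
    transitivity (Cmul (Cmul (qpoch (Cmul (RtoC lam) c) q n) (qpoch (Cmul (RtoC lam) d) q n))
       (Cmul (Csub C1 (Cmul (Cmul (RtoC lam) c) (RtoC (q ^ n)))) (Csub C1 (Cmul (Cmul (RtoC lam) d) (RtoC (q ^ n)))))).
    { field. }
    rewrite IHn, CS_mul_r.
    rewrite (CS_ext _ (fun k => Cadd (Cmul (Cmul (coefC q lam (Cmul c d) n k) (Aco q lam (Cmul c d) n k)) (phiC c d q k))
                                     (Cmul (Cmul (coefC q lam (Cmul c d) n k) (RtoC (lam * q ^ n / q ^ k))) (phiC c d q (S k)))))
      by (intros i _; rewrite <- Cring.(Rmul_assoc), PM by lra; field).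
    rewrite CS_add.
    rewrite (CS_ext (fun k => Cmul (coefC q lam (Cmul c d) (S n) k) (phiC c d q k))
       (fun k => Cadd (Cmul (Cmul (coefC q lam (Cmul c d) n k) (Aco q lam (Cmul c d) n k)) (phiC c d q k))
                      (Cmul (hC q lam (Cmul c d) n k) (phiC c d q k))))
      by (intros i Hi; rewrite COEF_rec by (auto; lia); field).
    rewrite CS_add. f_equal.
    + change (CS ?f (S (S n))) with (Cadd (CS f (S n)) (f (S n))).
      unfold coefC at 3. replace (S n <=? n)%nat with false by (symmetry; apply Nat.leb_gt; lia). field.
    + symmetry. rewrite CS_shift. simpl hC.
      match goal with |- Cadd (Cmul C0 ?x) ?y = _ => transitivity y; [field|reflexivity] end.
Qed.

Lemma Cmul_nz a b : a <> C0 -> b <> C0 -> Cmul a b <> C0.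
Proof. intros Ha Hb E. apply Hb. transitivity (Cmul (Cinv a) (Cmul a b)). field; auto. rewrite E. field; auto. Qed.

Lemma qpoch_nz z p k : (forall i, (i < k)%nat -> Csub C1 (Cmul z (RtoC (p ^ i))) <> C0) -> qpoch z p k <> C0.
Proof. induction k; intros H. simpl. unfold C1, C0, RtoC. intro E; injection E; lra.
  rewrite qpochS. apply Cmul_nz. apply IHk; intros; apply H; lia. apply H; lia. Qed.

Lemma qpoch_add z p a b : qpoch z p (a + b) = Cmul (qpoch z p a) (qpoch (Cmul z (RtoC (p ^ a))) p b).
Proof. induction b. rewrite Nat.add_0_r. simpl. field.
  rewrite Nat.add_succ_r, !qpochS, IHb. rewrite pow_add, RtoC_mul. field. Qed.

Lemma pw2' q j : (q^2)^j = q^j * q^j.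
Proof. rewrite <- pow_mult, <- pow_add. f_equal. lia. Qed.

Lemma qpoch_sq z q j : qpoch (Cmul z z) (q^2) j = Cmul (qpoch z q j) (qpoch (Copp z) q j).
Proof. induction j. simpl. field. rewrite !qpochS, IHj. rewrite pw2', RtoC_mul. field. Qed.

Lemma qpoch_pair w q j : Cmul (qpoch w (q^2) j) (qpoch (Cmul w (RtoC q)) (q^2) j) = qpoch w q (2*j).
Proof. induction j. simpl. field.
  replace (2 * S j)%nat with (S (S (2 * j))) by lia. rewrite !qpochS, <- IHj.
  rewrite pw2'. replace (q ^ S (2 * j)) with (q * (q^j * q^j)) by (simpl; rewrite <- pow_add; f_equal; f_equal; lia).
  replace (q ^ (2 * j)) with (q^j * q^j) by (rewrite <- pow_add; f_equal; lia).
  rewrite !RtoC_mul. field. Qed.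

Lemma qpoch_zero z p k i : p <> 0 -> (i < k)%nat -> z = RtoC (/ p ^ i) -> qpoch z p k = C0.
Proof. intros Hp; induction k; intros Hi Hz. lia. rewrite qpochS. destruct (Nat.eq_dec i k).
  - subst. rewrite <- RtoC_mul. rewrite Rinv_l by (apply pow_nonzero; auto). rewrite RtoC_1. field.
  - rewrite IHk by (auto; lia). field. Qed.

Lemma rqp_pm x q k : rqp x q k * rqp (- x) q k = rqp (x * x) (q^2) k.
Proof. induction k. simpl; ring. rewrite !rqpS, <- IHk, pw2'. ring. Qed.

Lemma sumR_same f a b : (forall j, (a <= j)%nat -> f j = 0) -> (forall j, (b <= j)%nat -> f j = 0) -> sumR f a = sumR f b.
Proof. intros Ha Hb. destruct (le_lt_dec a b).
  - replace b with (a + (b - a))%nat by lia. symmetry; apply sumR_zero_tail; auto.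
  - replace a with (b + (a - b))%nat by lia. apply sumR_zero_tail; auto. Qed.

Definition term43 (a1 a2 a3 a4 b1 b2 b3 : Cplx) (p : R) (k : nat) : Cplx :=
     Cmul
       (Cdiv (Cmul (Cmul (qpoch a1 p k) (qpoch a2 p k)) (Cmul (qpoch a3 p k) (qpoch a4 p k)))
             (Cmul (Cmul (qpoch b1 p k) (qpoch b2 p k)) (Cmul (qpoch b3 p k) (qpoch (RtoC p) p k))))
       (RtoC (p ^ k)).

Lemma phi43_eq a1 a2 a3 a4 b1 b2 b3 p :
  phi43 a1 a2 a3 a4 b1 b2 b3 p = Csum (term43 a1 a2 a3 a4 b1 b2 b3 p) (term_index a1 a2 a3 a4 p).
Proof. reflexivity. Qed.

Definition hC' c d q k := Cdiv (phiC c d q k) (qpoch (Copp (Cmul c d)) q k).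

Lemma RT q n B D c d j : 0 < q < 1 ->
  rqp D (q^2) j <> 0 ->
  (forall i, Csub C1 (Cmul (Copp (Cmul c d)) (RtoC (q ^ i))) <> C0) ->
  term43 (RtoC (/ q ^ (2*n))) (RtoC B) (Cmul c c) (Cmul d d) (RtoC D) (Copp (Cmul c d))
     (Cmul (Copp (Cmul c d)) (RtoC q)) (q^2) j
  = CS (fun m => Cmul (RtoC (T q n B D (j+m) j)) (hC' c d q (j+m))) (S j).
Proof.
  intros Hq HD Hs. unfold term43.
  rewrite !qpoch_R, !qpoch_sq.
  set (s := Cmul c d).
  assert (Hc : Copp c = Cmul (RtoC (lam q j)) (Cmul c (RtoC (q ^ j)))).
  { unfold lam. rewrite RtoC_opp, RtoC_inv'. field. apply RtoC_nz, pow_nonzero; lra. }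
  assert (Hd : Copp d = Cmul (RtoC (lam q j)) (Cmul d (RtoC (q ^ j)))).
  { unfold lam. rewrite RtoC_opp, RtoC_inv'. field. apply RtoC_nz, pow_nonzero; lra. }
  transitivity (Cmul (Cdiv (Cmul (Cmul (Cmul (RtoC (rqp (/ q ^ (2 * n)) (q ^ 2) j)) (RtoC (rqp B (q ^ 2) j)))
      (Cmul (qpoch c q j) (qpoch d q j))) (RtoC ((q^2)^j))) (Cmul (Cmul (RtoC (rqp D (q ^ 2) j)) (RtoC (rqp (q ^ 2) (q ^ 2) j))) (qpoch (Copp s) q (2*j))))
      (Cmul (qpoch (Copp c) q j) (qpoch (Copp d) q j))).
  { assert (Hp := qpoch_pair (Copp s) q j).
    assert (H2 : qpoch (Copp s) q (2 * j) <> C0) by (apply qpoch_nz; intros; apply Hs).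
    assert (qpoch (Copp s) (q ^ 2) j <> C0) by (intro E; rewrite E in Hp; apply H2; rewrite <- Hp; field).
    assert (qpoch (Cmul (Copp s) (RtoC q)) (q ^ 2) j <> C0) by (intro E; rewrite E in Hp; apply H2; rewrite <- Hp; field).
    assert (RtoC (rqp D (q ^ 2) j) <> C0) by (apply RtoC_nz; auto).
    assert (RtoC (rqp (q ^ 2) (q ^ 2) j) <> C0).
    { apply RtoC_nz, rqp_nz; intros i _. rewrite <- pow_mult. intro E.
      rewrite <- (pow_O q) in E. rewrite <- pow_add in E. apply qpow_inj in E; auto; lia. }
    rewrite <- Hp. field. auto. }
  rewrite Hc, Hd, CONN by auto.
  rewrite Cring.(Rmul_comm), CS_mul_r. apply CS_ext. intros m Hm.
  unfold coefC. replace (m <=? j)%nat with true by (symmetry; apply Nat.leb_le; lia).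
  rewrite T_in by lia. replace (2 * j - (j + m))%nat with (j - m)%nat by lia.
  replace (Cmul (Cmul (RtoC (lam q j)) (Cmul (Cmul c (RtoC (q ^ j))) (Cmul d (RtoC (q ^ j))))) (RtoC (q ^ m)))
    with (Cmul (Copp s) (RtoC (q ^ (j + m)))).
  2:{ unfold s, lam. rewrite pow_add, RtoC_opp, RtoC_inv', !RtoC_mul. field. apply RtoC_nz, pow_nonzero; lra. }
  replace (2 * j)%nat with ((j + m) + (j - m))%nat by lia. rewrite qpoch_add.
  unfold hC', phiC. fold s. rewrite !qpoch_add.
  replace (j + m - j)%nat with m by lia.
  assert (QS : forall a b, qpoch (Cmul (Copp s) (RtoC (q ^ a))) q b <> C0).
  { intros a b. apply qpoch_nz. intros i _. replace (Cmul (Cmul (Copp s) (RtoC (q ^ a))) (RtoC (q ^ i)))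
      with (Cmul (Copp s) (RtoC (q ^ (a + i)))) by (rewrite pow_add, RtoC_mul; field). apply Hs. }
  assert (Q0 : qpoch (Copp s) q j <> C0) by (apply qpoch_nz; intros; apply Hs).
  assert (RtoC (rqp D (q ^ 2) j) <> C0) by (apply RtoC_nz; auto).
  assert (RtoC (rqp (q ^ 2) (q ^ 2) j) <> C0).
  { apply RtoC_nz, rqp_nz; intros i _. rewrite <- pow_mult. intro E.
    rewrite <- (pow_O q) in E. rewrite <- pow_add in E. apply qpow_inj in E; auto; lia. }
  assert (RtoC (rqp q q m) <> C0) by (apply RtoC_nz, rqp_q_nz; auto).
  assert (RtoC (rqp q q (j - m)) <> C0) by (apply RtoC_nz, rqp_q_nz; auto).
  assert (RtoC (rqp q q j) <> C0) by (apply RtoC_nz, rqp_q_nz; auto).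
  generalize (QS j m) (QS (j + m)%nat (j - m)%nat); intros Q1 Q2.
  unfold Rr, qb. pushC.
  field. repeat split; auto.
Qed.

Lemma CS_zero f n : (forall i, (i < n)%nat -> f i = C0) -> CS f n = C0.
Proof. induction n; simpl; intros H. reflexivity. rewrite IHn, H by (auto; lia). field. Qed.

Lemma LT q n N B c d k : 0 < q < 1 ->
  rqp (/ q ^ (2*N)) (q^2) k <> 0 ->
  (forall i, Csub C1 (Cmul (Copp (Cmul c d)) (RtoC (q ^ i))) <> C0) ->
  term43 (RtoC (/ q ^ (2*n))) (RtoC B) c d (RtoC (/ q ^ N)) (RtoC (- / q ^ N)) (Copp (Cmul c d)) q k
  = Cmul (RtoC (Ll q n B (/ q ^ (2*N)) k)) (hC' c d q k).
Proof.
  intros Hq HD Hs. unfold term43, Ll, hC', phiC. rewrite !qpoch_R.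
  assert (E : rqp (/ q ^ N) q k * rqp (- / q ^ N) q k = rqp (/ q ^ (2 * N)) (q ^ 2) k).
  { rewrite rqp_pm. f_equal. rewrite <- Rinv_mult, <- pow_add. f_equal. f_equal. lia. }
  rewrite <- E in *.
  assert (Q0 : qpoch (Copp (Cmul c d)) q k <> C0) by (apply qpoch_nz; intros; apply Hs).
  assert (RtoC (rqp (/ q ^ N) q k) <> C0) by (apply RtoC_nz; intro Z; apply HD; rewrite Z; ring).
  assert (RtoC (rqp (- / q ^ N) q k) <> C0) by (apply RtoC_nz; intro Z; apply HD; rewrite Z; ring).
  assert (RtoC (rqp q q k) <> C0) by (apply RtoC_nz, rqp_q_nz; auto).
  pushC. field. repeat split; auto.
Qed.

Lemma reindex (g : nat -> Cplx) j n : (j <= n)%nat ->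
  (forall k, (k < j)%nat -> g k = C0) -> (forall k, (2 * j < k)%nat -> g k = C0) ->
  CS (fun m => g (j + m)%nat) (S j) = CS g (S (2 * n)).
Proof.
  intros Hjn H1 H2. replace (S (2 * n)) with (j + (S j + (2 * n - 2 * j)))%nat by lia.
  rewrite CS_split. rewrite (CS_zero g j H1).
  rewrite (CS_zero_tail (fun i => g (j + i)%nat) (S j) (2 * n - 2 * j)).
  - field.
  - intros i Hi. apply H2. lia.
Qed.

Lemma MAIN q N n c d : 0 < q < 1 -> (n <= N)%nat ->
  (forall i, Csub C1 (Cmul (Copp (Cmul c d)) (RtoC (q ^ i))) <> C0) ->
  ((2 * n <= N)%nat \/ exists k0, (k0 <= N)%nat /\ c = RtoC (/ q ^ k0)) ->
  CS (term43 (RtoC (/ q ^ (2*n))) (RtoC (/ q ^ (2*(N-n)+1))) c d (RtoC (/ q ^ N)) (RtoC (- / q ^ N))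
        (Copp (Cmul c d)) q) (S (2*n)) =
  CS (term43 (RtoC (/ q ^ (2*n))) (RtoC (/ q ^ (2*(N-n)+1))) (Cmul c c) (Cmul d d) (RtoC (/ q ^ (2*N)))
        (Copp (Cmul c d)) (Cmul (Copp (Cmul c d)) (RtoC q)) (q^2)) (S n).
Proof.
  intros Hq HnN Hs Hcase.
  set (B := / q ^ (2*(N-n)+1)). set (D := / q ^ (2*N)).
  assert (Hq0 : q <> 0) by lra.
  assert (HB : B = D * q^(2*n) / q).
  { unfold B, D. replace N with (n + (N - n))%nat at 2 by lia.
    replace (2 * (n + (N - n)))%nat with (2 * n + 2 * (N - n))%nat by lia.
    rewrite !pow_add. simpl pow. field. split; [|split]; auto; apply pow_nonzero; auto. }
  assert (HD : forall i, (i < N)%nat -> D * (q^2)^i <> 1).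
  { intros i Hi E. unfold D in E. rewrite <- pow_mult in E.
    assert (q ^ (2 * i) = q ^ (2 * N)).
    { apply (Rmult_eq_reg_l (/ q ^ (2 * N))). rewrite E. field. apply pow_nonzero; auto.
      apply Rinv_neq_0_compat, pow_nonzero; auto. }
    apply qpow_inj in H; auto; lia. }
  symmetry.
  rewrite (CS_ext _ (fun j => CS (fun m => Cmul (RtoC (T q n B D (j+m) j)) (hC' c d q (j+m))) (S j))).
  2:{ intros j Hj. apply RT; auto. apply rqp_nz; intros; apply HD; lia. }
  rewrite (CS_ext _ (fun j => CS (fun k => Cmul (RtoC (T q n B D k j)) (hC' c d q k)) (S (2*n)))).
  2:{ intros j Hj. apply (reindex (fun k => Cmul (RtoC (T q n B D k j)) (hC' c d q k))).
      lia. intros; rewrite T_out by lia; rewrite RtoC_0; field. intros; rewrite T_out by lia; rewrite RtoC_0; field. }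
  rewrite CS_swap.
  apply CS_ext. intros k Hk.
  rewrite <- CS_mul_r, CS_sumR.
  destruct (le_lt_dec k N) as [HkN|HkN].
  - rewrite LT; auto.
    2:{ apply rqp_nz; intros; apply HD; lia. }
    fold D. f_equal. f_equal. symmetry. rewrite <- (SCAL q n B D k); auto.
    + apply sumR_same.
      * intros j Hj. apply T_out; lia.
      * intros j Hj. destruct (le_dec j k); [destruct (le_dec k (2*j))|].
        -- rewrite T_in by lia. unfold Rr. rewrite (rqp_zero (/ q ^ (2 * n)) (q^2) j n) by
             (try lia; rewrite <- pow_mult; field; apply pow_nonzero; auto). unfold Rdiv. ring.
        -- apply T_out; lia.
        -- apply T_out; lia.
    + intros; apply HD; lia.
  - destruct Hcase as [Hc|[k0 [Hk0 Hc]]]. lia.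
    assert (Z : qpoch c q k = C0) by (apply (qpoch_zero c q k k0); auto; lia).
    unfold term43, hC', phiC, Cdiv. rewrite Z. ring.
Qed.

Lemma min_exists (P : nat -> Prop) M : P M -> exists K, P K /\ forall j, (j < K)%nat -> ~ P j.
Proof.
  induction M as [M IH] using (well_founded_induction lt_wf). intros HM.
  destruct (classic (exists j, (j < M)%nat /\ P j)) as [[j [Hj Pj]]|Hn].
  - apply (IH j Hj Pj).
  - exists M. split; auto. intros j Hj Pj. apply Hn. eauto.
Qed.

Lemma phi43_trunc a1 a2 a3 a4 b1 b2 b3 p M : p <> 0 -> a1 = RtoC (/ p ^ M) ->
  phi43 a1 a2 a3 a4 b1 b2 b3 p = CS (term43 a1 a2 a3 a4 b1 b2 b3 p) (S M).
Proof.
  intros Hp Ha. rewrite phi43_eq, Csum_CS. unfold term_index.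
  set (Pm := fun K => terminates_at a1 a2 a3 a4 p K /\ (forall j, (j < K)%nat -> ~ terminates_at a1 a2 a3 a4 p j)).
  assert (Hex : exists K, Pm K).
  { apply (min_exists (terminates_at a1 a2 a3 a4 p) M). unfold terminates_at. left; auto. }
  assert (Hs := epsilon_spec (inhabits 0%nat) Pm Hex).
  set (K := epsilon (inhabits 0%nat) Pm) in *. destruct Hs as [HK Hmin].
  assert (HKM : (K <= M)%nat).
  { destruct (le_lt_dec K M); auto. exfalso. apply (Hmin M); auto. unfold terminates_at; left; auto. }
  replace (S M) with (S K + (M - K))%nat by lia.
  symmetry. apply CS_zero_tail. intros i Hi.
  unfold term43, Cdiv.
  unfold terminates_at in HK.
  destruct HK as [H|[H|[H|H]]];
    [rewrite (qpoch_zero a1 p i K) | rewrite (qpoch_zero a2 p i K) | rewrite (qpoch_zero a3 p i K) | rewrite (qpoch_zero a4 p i K)];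
    auto; try lia; ring.
Qed.

Lemma Cexp_add z w : Cexp (Cadd z w) = Cmul (Cexp z) (Cexp w).
Proof. destruct z as [a b], w as [c e]. unfold Cexp, Cadd, Cmul; simpl.
  rewrite exp_plus, cos_plus, sin_plus. apply Cpair_eq; ring. Qed.

Lemma Cqpow_add q z w : Cqpow q (Cadd z w) = Cmul (Cqpow q z) (Cqpow q w).
Proof. unfold Cqpow. rewrite <- Cexp_add. f_equal. field. Qed.

Lemma Cqpow_real q r : Cqpow q (RtoC r) = RtoC (exp (r * ln q)).
Proof. unfold Cqpow, Cexp, Cmul, RtoC; simpl. rewrite Rmult_0_l, Rmult_0_r, Rmult_0_l, Rminus_0_r, Rplus_0_r, cos_0, sin_0.
  apply Cpair_eq; ring. Qed.

Lemma Cqpow_nat q k : 0 < q -> Cqpow q (Copp (RtoC (INR k))) = RtoC (/ q ^ k).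
Proof. intros Hq. rewrite <- RtoC_opp, Cqpow_real. f_equal.
  replace (- INR k * ln q) with (- (INR k * ln q)) by ring. rewrite exp_Ropp. f_equal. rewrite <- (Rpower_pow k q Hq). reflexivity. Qed.

Lemma Cqpow_1 q : 0 < q -> Cqpow q C1 = RtoC q.
Proof. intros Hq. unfold C1. rewrite Cqpow_real. f_equal. rewrite Rmult_1_l. apply exp_ln; auto. Qed.

Lemma GEN q N n gamma x : 0 < q < 1 -> (n <= N)%nat ->
  (forall j : nat, Cmul gamma (RtoC q) <> RtoC (/ q ^ j)) ->
  ((2 * n <= N)%nat \/ exists k0, (k0 <= N)%nat /\ Cqpow q (Copp x) = RtoC (/ q ^ k0)) ->
  LHS9 q N n gamma x = RHS9 q N n gamma x.
Proof.
  intros Hq HnN Hg Hcase.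
  assert (Hq0 : q <> 0) by lra.
  set (c := Cqpow q (Copp x)) in *. set (e := Cqpow q (Cadd x C1)).
  set (d := Copp (Cmul gamma e)).
  assert (Hce : Cmul c e = RtoC q).
  { unfold c, e. rewrite <- Cqpow_add. replace (Cadd (Copp x) (Cadd x C1)) with C1.
    apply Cqpow_1; lra. destruct x; cbv [Cadd Copp C1 RtoC fst snd]; apply Cpair_eq; ring. }
  assert (Hs : Cmul gamma (RtoC q) = Copp (Cmul c d)).
  { unfold d. rewrite <- Hce. field. }
  assert (Hcc : Cqpow q (Cmul (RtoC (-2)) x) = Cmul c c).
  { unfold c. rewrite <- Cqpow_add. f_equal. destruct x; cbv [Cadd Copp Cmul RtoC fst snd]; apply Cpair_eq; ring. }
  assert (Hdd : Cmul (Cmul gamma gamma) (Cqpow q (Cadd (Cmul (RtoC 2) x) (RtoC 2))) = Cmul d d).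
  { unfold d, e. replace (Cadd (Cmul (RtoC 2) x) (RtoC 2)) with (Cadd (Cadd x C1) (Cadd x C1)).
    rewrite Cqpow_add. field. destruct x; cbv [Cadd Copp Cmul RtoC C1 fst snd]; apply Cpair_eq; ring. }
  assert (Hs2 : Cmul gamma (RtoC (q ^ 2)) = Cmul (Copp (Cmul c d)) (RtoC q)).
  { rewrite <- Hs. replace (q ^ 2) with (q * q) by ring. rewrite RtoC_mul. field. }
  unfold LHS9, RHS9. fold e. fold d.
  rewrite (phi43_trunc _ _ _ _ _ _ _ q (2 * n)) by auto.
  rewrite (phi43_trunc _ _ _ _ _ _ _ (q ^ 2) n).
  2:{ apply pow_nonzero; auto. }
  2:{ f_equal. rewrite <- pow_mult. reflexivity. }
  rewrite Hs, Hcc, Hdd, Hs2.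
  replace (2 * N + 1 - 2 * n)%nat with (2 * (N - n) + 1)%nat by lia.
  apply MAIN; auto.
  intros i E. apply (Hg i). rewrite Hs.
  assert (RtoC (q ^ i) <> C0) by (apply RtoC_nz, pow_nonzero; auto).
  rewrite RtoC_inv'.
  transitivity (Cmul (Cmul (Copp (Cmul c d)) (RtoC (q ^ i))) (Cinv (RtoC (q ^ i)))). field; auto.
  replace (Cmul (Copp (Cmul c d)) (RtoC (q ^ i))) with C1. ring.
  transitivity (Csub C1 (Csub C1 (Cmul (Copp (Cmul c d)) (RtoC (q ^ i))))). rewrite E. field. field.
Qed.

Theorem mainTheorem9 (q : R) (N n : nat) (gamma : Cplx) :
  0 < q < 1 ->
  (0 < N)%nat ->
  (n <= N)%nat ->
  (forall j : nat, Cmul gamma (RtoC q) <> RtoC (/ q ^ j)) ->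
  (forall j : nat, Cmul gamma (RtoC (q ^ 2)) <> RtoC (/ q ^ j)) ->
  ((2 * n <= N)%nat -> forall x : Cplx, LHS9 q N n gamma x = RHS9 q N n gamma x) /\
  ((N < 2 * n)%nat -> forall k : nat, (k <= N)%nat ->
      LHS9 q N n gamma (RtoC (INR k)) = RHS9 q N n gamma (RtoC (INR k))).
Proof.
  intros Hq HN HnN Hg1 Hg2. split.
  - intros H x. apply GEN; auto.
  - intros H k Hk. apply GEN; auto. right. exists k. split; auto. apply Cqpow_nat. lra.
Qed.
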